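(* Let $|\psi\rangle$ be a normalized $n$-qubit state such that the stabilizer of $|\psi\rangle^{\otimes 2}$ equals $\{\mathbb{1},\mathrm{SWAP}\}$. Let $\epsilon\in(0,1)$, and let $h_1,h_2\in\mathrm{GL}(2,\mathbb{C})$ with $H_1=h_1^\dagger h_1=\mathrm{diag}(1,\epsilon)$ and $H_2=h_2^\dagger h_2=\mathrm{diag}(\epsilon,1)$. Set $|\psi_i\rangle=(\mathbb{1}^{\otimes n-1}\otimes h_i)|\psi\rangle$ and $n_i=\||\psi_i\rangle\|$. Then the maximal success probability of transforming $|\psi\rangle^{\otimes 2}$ into the normalized state $|\psi_1\rangle\otimes|\psi_2\rangle/(n_1n_2)$ by separable operations equals $\frac{2}{1+\epsilon^2}(n_1n_2)^2$, and this probability is attained by an LOCC protocol. This value is strictly larger than $(n_1n_2)^2$, which is the product of the maximal separable-operation success probabilities of the single-state transformations $|\psi\rangle\mapsto|\psi_1\rangle/n_1$ and $|\psi\rangle\mapsto|\psi_2\rangle/n_2$.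
   Context: The two-copy state $|\psi\rangle^{\otimes 2}$ is an $n$-partite state in which party $i$ holds qubit $i$ of both copies (local dimension 4). The stabilizer of $|\psi\rangle^{\otimes 2}$ is the set of $S=\bigotimes_{i=1}^n S^{(i)}$ with $S^{(i)}\in\mathrm{GL}(4,\mathbb{C})$ and $S|\psi\rangle^{\otimes 2}=|\psi\rangle^{\otimes 2}$. $\mathrm{SWAP}=\mathrm{SWAP}^{\otimes n}$, where each party exchanges its two qubits. A separable operation is an operation with Kraus operators of product form $M_k=\bigotimes_i M_k^{(i)}$ with $\sum_k M_k^\dagger M_k\le\mathbb{1}$. Its success probability for a transformation $|a\rangle\mapsto|b\rangle$ of normalized states is $\sum_{k\in K}\|M_k|a\rangle\|^2$, where $K$ is the set of branches satisfying $M_k|a\rangle\propto|b\rangle$. The maximal success probability is the supremum of this over all separable operations. In each transformation the operator $h_i$ acts on the $n$-th party's qubit. *)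

(* Defs.v *)
From HB Require Import structures.
From mathcomp Require Import all_boot all_order all_algebra.
From mathcomp Require Import complex.
From mathcomp Require Import reals.

Set Implicit Arguments.
Unset Strict Implicit.
Unset Printing Implicit Defensive.

Import Order.TTheory GRing.Theory Num.Theory.
Local Open Scope ring_scope.

Section QuantumDefs.
Variable R : realType.
Local Notation C := R[i].

Definition cabs2 (z : C) : R := complex.Re z ^+ 2 + complex.Im z ^+ 2.

(* computational basis configurations: party i is in local basis state x i *)
Definition cfg (n d : nat) := {ffun 'I_n -> 'I_d}.
(* (unnormalized) pure states / vectors of the global Hilbert space *)
Definition vec (n d : nat) := cfg n d -> C.

Definition vnorm2 n d (v : vec n d) : R := \sum_(x : cfg n d) cabs2 (v x).

Definition vscale n d (c : C) (v : vec n d) : vec n d := fun x => c * v x.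

(* local operator family  M : 'I_n -> 'M_d  represents  \bigotimes_i M i *)
Definition prodop n d (M : 'I_n -> 'M[C]_d) (v : vec n d) : vec n d :=
  fun x => \sum_(y : cfg n d) (\prod_(i < n) M i (x i) (y i)) * v y.

Definition adj d (A : 'M[C]_d) : 'M[C]_d := (map_mx Num.conj A)^T.

Definition at_party n d (j : 'I_n) (h : 'M[C]_d) : 'I_n -> 'M[C]_d :=
  fun i => if i == j then h else 1%:M.

(* ---------- two copies: party i holds qubit i of both copies ---------- *)
(* local basis of party i (dimension 4):  k = 2 * a + b  with a the qubit of
   the first copy and b the qubit of the second copy *)
Definition hi4 (k : 'I_4) : 'I_2 := inord (k %/ 2).
Definition lo4 (k : 'I_4) : 'I_2 := inord (k %% 2).

Definition twocopy n (a b : vec n 2) : vec n 4 :=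
  fun x => a [ffun i => hi4 (x i)] * b [ffun i => lo4 (x i)].

(* local SWAP of the two qubits of a party: |a b> |-> |b a> *)
Definition swap4 : 'M[C]_4 :=
  \matrix_(k, l) (((hi4 k == lo4 l) && (lo4 k == hi4 l))%:R).

Definition in_stabilizer n d (v : vec n d) (op : vec n d -> vec n d) : Prop :=
  exists S : 'I_n -> 'M[C]_d,
    (forall i, S i \in unitmx) /\ op = prodop S /\ prodop S v = v.

(* a finite family of product Kraus operators  M_k = \bigotimes_i M_k^(i) *)
Definition kraus n d := seq ('I_n -> 'M[C]_d).

(* \sum_k M_k^dagger M_k <= 1, i.e.  <v| (1 - \sum_k M_k^dag M_k) |v> >= 0 *)
Definition separable_op n d (K : kraus n d) : Prop :=
  forall v : vec n d, \sum_(M <- K) vnorm2 (prodop M v) <= vnorm2 v.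

Definition proportional n d (u w : vec n d) : Prop :=
  exists c : C, u = vscale c w.

(* p is the success probability of the transformation a -> b with Kraus
   family K: the sum of ||M_k a||^2 over exactly the branches k with
   M_k a proportional to b *)
Definition success_prob n d (K : kraus n d) (a b : vec n d) (p : R) : Prop :=
  exists msk : seq bool,
    size msk = size K /\
    (forall k, (k < size K)%N ->
       (nth false msk k <-> proportional (prodop (nth (fun _ => 1%:M) K k) a) b)) /\
    p = \sum_(M <- mask msk K) vnorm2 (prodop M a).

Definition ofR (x : R) : C := Complex x 0.

Definition is_max_sep_prob n d (a b : vec n d) (p : R) : Prop :=
  (forall (K : kraus n d) (q : R), separable_op K -> success_prob K a b q -> q <= p) /\
  (forall u : R,
     (forall (K : kraus n d) (q : R), separable_op K -> success_prob K a b q -> q <= u) ->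
     p <= u).

(* In each round one party  i  applies a local instrument with Kraus operators
   A_0, ..., A_{K-1} on its system and broadcasts the outcome k; the rest of
   the protocol ([next k]) may depend on all outcomes so far. *)
Inductive locc (n d : nat) : Type :=
| LStop
| LRound (i : 'I_n) (K : nat) (A : 'I_K -> 'M[C]_d) (next : 'I_K -> locc n d).

Definition cvnorm2 d (v : 'cV[C]_d) : R := \sum_(j < d) cabs2 (v j 0).

Fixpoint locc_ok n d (P : locc n d) : Prop :=
  match P with
  | LStop => True
  | LRound i K A next =>
      (forall v : 'cV[C]_d, \sum_(k < K) cvnorm2 (A k *m v) <= cvnorm2 v) /\
      (forall k, locc_ok (next k))
  end.

(* the product Kraus operators of all branches of the protocol
   (a later round is applied after an earlier one) *)
Fixpoint branches n d (P : locc n d) : kraus n d :=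
  match P with
  | LStop => [:: fun _ => 1%:M]
  | LRound i K A next =>
      flatten [seq [seq (fun j => N j *m at_party i (A k) j) | N <- branches (next k)]
              | k <- enum 'I_K]
  end.

End QuantumDefs.

(* Main.v *)
Require Import Defs.
From HB Require Import structures.
From mathcomp Require Import all_boot all_order all_algebra.
From mathcomp Require Import complex mxtens.
From mathcomp Require Import reals.
From mathcomp Require Import ring lra.
From Stdlib Require Import FunctionalExtensionality.
Import Order.TTheory GRing.Theory Num.Theory ComplexField.
Local Open Scope ring_scope.
Local Open Scope complex_scope.
Set Implicit Arguments.
Unset Strict Implicit.
Unset Printing Implicit Defensive.
Section Basics.
Variable R : realType.
Local Notation C := R[i].

Lemma ofRD (a b : R) : ofR (a + b) = ofR a + ofR b.
Proof. by rewrite /ofR; simpc. Qed.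
Lemma ofRM (a b : R) : ofR (a * b) = ofR a * ofR b.
Proof. by rewrite /ofR; simpc. Qed.
Lemma ofR0 : ofR 0 = 0 :> C. Proof. by []. Qed.
Lemma ofR1 : ofR 1 = 1 :> C. Proof. by []. Qed.
Lemma ofR_inj : injective (@ofR R).
Proof. by move=> a b []. Qed.
Lemma ofR_sum (I : Type) (r : seq I) (P : pred I) (F : I -> R) :
  ofR (\sum_(i <- r | P i) F i) = \sum_(i <- r | P i) ofR (F i).
Proof. by apply: (big_morph _ ofRD ofR0). Qed.
Lemma ofR_le (a b : R) : (ofR a <= ofR b) = (a <= b).
Proof. rewrite /ofR; simpc. by []. Qed.
Lemma conj_ofR (a : R) : Num.conj (ofR a) = ofR a.
Proof. rewrite /ofR. change (Complex a (- 0) = Complex a 0). by rewrite oppr0. Qed.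

Lemma cabs2E (z : C) : ofR (cabs2 z) = Num.conj z * z.
Proof. case: z => a b; rewrite /cabs2 /=; simpc. by rewrite !expr2 [b * a]mulrC subrr. Qed.

Lemma cabs2_ge0 (z : C) : 0 <= cabs2 z.
Proof. by rewrite /cabs2 addr_ge0 // sqr_ge0. Qed.

Lemma cabs2M (z w : C) : cabs2 (z * w) = cabs2 z * cabs2 w.
Proof.
case: z w => [a b] [c d]; rewrite /cabs2 /=; ring.
Qed.

Lemma vnorm2_ge0 n d (v : vec R n d) : 0 <= vnorm2 v.
Proof. by rewrite /vnorm2 sumr_ge0 // => x _; apply: cabs2_ge0. Qed.

Lemma vnorm2C n d (v : vec R n d) :
  ofR (vnorm2 v) = \sum_x Num.conj (v x) * v x.
Proof. by rewrite /vnorm2 ofR_sum; apply: eq_bigr => x _; rewrite cabs2E. Qed.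

Lemma vnorm2_scale n d (c : C) (v : vec R n d) :
  vnorm2 (vscale c v) = cabs2 c * vnorm2 v.
Proof. by rewrite /vnorm2 mulr_sumr; apply: eq_bigr => x _; rewrite /vscale cabs2M. Qed.

Lemma eq_prodop n d (A B : 'I_n -> 'M[C]_d) v :
  (forall i, A i = B i) -> prodop A v = prodop B v.
Proof.
move=> AB; apply: functional_extensionality => x; rewrite /prodop.
by apply: eq_bigr => y _; congr (_ * _); apply: eq_bigr => i _; rewrite AB.
Qed.

Lemma prodop_comp n d (A B : 'I_n -> 'M[C]_d) v :
  prodop A (prodop B v) = prodop (fun i => A i *m B i) v.
Proof.
apply: functional_extensionality => x; rewrite /prodop.
under eq_bigr do rewrite big_distrr /=.
rewrite exchange_big /=; apply: eq_bigr => z _.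
under eq_bigr do rewrite mulrA.
rewrite -big_distrl /=; congr (_ * _).
under [RHS]eq_bigr do rewrite mxE.
rewrite bigA_distr_bigA /=; apply: eq_bigr => y _.
by rewrite -big_split.
Qed.

Definition delta n d (z : cfg n d) : vec R n d := fun x => (x == z)%:R.

Definition upd n d (M : 'I_n -> 'M[C]_d) (j : 'I_n) (A : 'M[C]_d) : 'I_n -> 'M[C]_d :=
  fun i => if i == j then A else M i.

Lemma prod_eq n d (x y : cfg n d) :
  \prod_(i < n) ((x i == y i)%:R : C) = (x == y)%:R.
Proof.
case: eqP => [->|ne]; first by rewrite big1 // => i _; rewrite eqxx.
have [i ni] : exists i, x i != y i.
  apply/existsP; apply: contraT; rewrite negb_exists => /forallP H.
  by case: ne; apply/ffunP => i; apply/eqP; move: (H i); rewrite negbK.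
by rewrite (bigD1 i) //= (negbTE ni) mul0r.
Qed.

Lemma sum_delta n d (F : cfg n d -> C) (x : cfg n d) :
  \sum_y (x == y)%:R * F y = F x.
Proof.
rewrite (bigD1 x) //= eqxx mul1r big1 ?addr0 // => y yx.
by rewrite eq_sym (negbTE yx) mul0r.
Qed.

Lemma prodop_id n d (v : vec R n d) : prodop (fun _ => 1%:M) v = v.
Proof.
apply: functional_extensionality => x; rewrite /prodop.
under eq_bigr do under eq_bigr do rewrite mxE.
by under eq_bigr do rewrite prod_eq; rewrite sum_delta.
Qed.

Lemma prodop_delta n d (M : 'I_n -> 'M[C]_d) z x :
  prodop M (delta z) x = \prod_i M i (x i) (z i).
Proof.
rewrite /prodop /delta (bigD1 z) //= eqxx mulr1 [X in _ + X]big1 ?addr0 //.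
by move=> y /negbTE ->; rewrite mulr0.
Qed.

Lemma prodop_scale n d (M : 'I_n -> 'M[C]_d) c v :
  prodop M (vscale c v) = vscale c (prodop M v).
Proof.
apply: functional_extensionality => x; rewrite /prodop /vscale mulr_sumr.
by apply: eq_bigr => y _; rewrite mulrCA.
Qed.

Lemma prodop_updZ n d (M : 'I_n -> 'M[C]_d) j c v :
  prodop (upd M j (c *: M j)) v = vscale c (prodop M v).
Proof.
apply: functional_extensionality => x; rewrite /prodop /vscale mulr_sumr.
apply: eq_bigr => y _; rewrite mulrA; congr (_ * _).
rewrite (bigD1 j) //= [in RHS](bigD1 j) //= /upd eqxx mxE -mulrA; congr (_ * (_ * _)).
by apply: eq_bigr => i /negbTE ->.
Qed.

Lemma prodop_upd0 n d (M : 'I_n -> 'M[C]_d) j v :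
  prodop (upd M j 0) v = fun _ => 0.
Proof.
apply: functional_extensionality => x; rewrite /prodop big1 // => y _.
by rewrite (bigD1 j) //= /upd eqxx mxE mul0r mul0r.
Qed.

Lemma prodop_updD n d (M : 'I_n -> 'M[C]_d) j A B v x :
  prodop (upd M j (A + B)) v x = prodop (upd M j A) v x + prodop (upd M j B) v x.
Proof.
rewrite /prodop -big_split /=; apply: eq_bigr => y _.
rewrite -mulrDl; congr (_ * _).
rewrite (bigD1 j) //= [X in _ = X + _](bigD1 j) //= [X in _ = _ + X](bigD1 j) //=.
rewrite /upd eqxx mxE mulrDl; congr (_ * _ + _ * _).
  by apply: eq_bigr => i /negbTE ->.
by apply: eq_bigr => i /negbTE ->.
Qed.

Lemma norm_prodop n d (M : 'I_n -> 'M[C]_d) (v : vec R n d) :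
  ofR (vnorm2 (prodop M v)) =
  \sum_y Num.conj (v y) * prodop (fun i => adj (M i) *m M i) v y.
Proof.
rewrite vnorm2C /prodop.
under eq_bigr => x _ do rewrite rmorph_sum /= big_distrl /=.
rewrite exchange_big /=; apply: eq_bigr => y _.
under eq_bigr => x _ do rewrite big_distrr /=.
rewrite exchange_big /= big_distrr /=; apply: eq_bigr => y' _.
have -> : \sum_(x : cfg n d) (Num.conj (\prod_(i0 < n) M i0 (x i0) (y i0) * v y) *
      (\prod_(i0 < n) M i0 (x i0) (y' i0) * v y')) =
   Num.conj (v y) * (\sum_(x : cfg n d) \prod_(i0 < n) (Num.conj (M i0 (x i0) (y i0)) * M i0 (x i0) (y' i0))) * v y'.
  rewrite mulr_sumr mulr_suml; apply: eq_bigr => x _.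
  rewrite rmorphM /= rmorph_prod /= big_split /=.
  by ring.
rewrite -!mulrA; congr (_ * (_ * _)).
under [RHS]eq_bigr do rewrite mxE.
rewrite bigA_distr_bigA /=; apply: eq_bigr => x _; apply: eq_bigr => i _.
by rewrite /adj !mxE.
Qed.

Lemma prodop_diag n d (e : 'I_n -> 'I_d -> C) (v : vec R n d) y :
  prodop (fun i => diag_mx (\row_k e i k)) v y = (\prod_i e i (y i)) * v y.
Proof.
rewrite /prodop (bigD1 y) //= [X in _ + X]big1 ?addr0.
  by congr (_ * _); apply: eq_bigr => i _; rewrite !mxE eqxx mulr1n.
move=> y' ny; have [i ni] : exists i, y i != y' i.
  apply/existsP; apply: contraT; rewrite negb_exists => /forallP H.
  by case/eqP: ny; apply/ffunP => i; apply/eqP; move: (H i); rewrite negbK eq_sym.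
by rewrite (bigD1 i) //= !mxE (negbTE ni) mulr0n mul0r mul0r.
Qed.


Lemma adj1 d : adj (1%:M : 'M[C]_d) = 1%:M.
Proof.
apply/matrixP => a b; rewrite /adj !mxE eq_sym.
by rewrite rmorph_nat.
Qed.

Lemma adjM d (A B : 'M[C]_d) : adj (A *m B) = adj B *m adj A.
Proof. by rewrite /adj map_mxM trmx_mul. Qed.

Lemma adjZ d (c : C) (A : 'M[C]_d) : adj (c *: A) = Num.conj c *: adj A.
Proof. by apply/matrixP => a b; rewrite /adj !mxE rmorphM. Qed.

Lemma one_diag d : (1%:M : 'M[C]_d) = diag_mx (\row_k 1).
Proof. by apply/matrixP => a b; rewrite !mxE. Qed.

Lemma norm_at n d (j : 'I_n) (A : 'M[C]_d) (D : 'I_d -> R) (v : vec R n d) :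
  adj A *m A = diag_mx (\row_k ofR (D k)) ->
  vnorm2 (prodop (at_party j A) v) = \sum_(y : cfg n d) D (y j) * cabs2 (v y).
Proof.
move=> HA; apply: ofR_inj; rewrite norm_prodop ofR_sum.
rewrite (@eq_prodop _ _ _ (fun i => diag_mx (\row_k (if i == j then ofR (D k) else 1)))).
  apply: eq_bigr => y _; rewrite prodop_diag (bigD1 j) //= eqxx big1.
    by rewrite mulr1 ofRM cabs2E; ring.
  by move=> i /negbTE ->.
move=> i; rewrite /at_party; case: (i == j); first by rewrite HA.
by rewrite adj1 mulmx1 one_diag.
Qed.

Lemma vnorm2_delta n d (z : cfg n d) : vnorm2 (delta z) = 1.
Proof.
rewrite /vnorm2 (bigD1 z) //= big1 ?addr0.
  by rewrite /delta eqxx /cabs2 /= expr1n expr0n addr0.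
by move=> y /negbTE yz; rewrite /delta yz /cabs2 /= expr0n addr0.
Qed.

Lemma norm_at_delta n d (j : 'I_n) (A : 'M[C]_d) (D : 'I_d -> R) (z : cfg n d) :
  adj A *m A = diag_mx (\row_k ofR (D k)) ->
  vnorm2 (prodop (at_party j A) (delta z)) = D (z j).
Proof.
move=> HA; rewrite (norm_at j (delta z) HA) (bigD1 z) //= big1 ?addr0.
  by rewrite /delta eqxx /cabs2 /= expr1n expr0n addr0 mulr1.
by move=> y /negbTE yz; rewrite /delta yz /cabs2 /= expr0n addr0 mulr0.
Qed.

Definition comb (a b : 'I_2) : 'I_4 := mxtens_index (a, b).

Lemma hi4_comb a b : hi4 (comb a b) = a.
Proof.
apply: val_inj; case: a => [[|[|a]] Ha] //; case: b => [[|[|b]] Hb] //;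
  by rewrite /hi4 /comb /= inordK.
Qed.

Lemma lo4_comb a b : lo4 (comb a b) = b.
Proof.
apply: val_inj; case: a => [[|[|a]] Ha] //; case: b => [[|[|b]] Hb] //;
  by rewrite /lo4 /comb /= inordK.
Qed.

Lemma combK (k : 'I_4) : comb (hi4 k) (lo4 k) = k.
Proof.
apply: val_inj; case: k => [[|[|[|[|k]]]] Hk] //;
  by rewrite /hi4 /lo4 /comb /= !inordK.
Qed.

Lemma eq_comb (l : 'I_4) a b : (l == comb a b) = (hi4 l == a) && (lo4 l == b).
Proof.
apply/eqP/andP => [->|[/eqP <- /eqP <-]]; last by rewrite combK.
by rewrite hi4_comb lo4_comb.
Qed.

Lemma eq_I4 (k l : 'I_4) : (k == l) = (hi4 k == hi4 l) && (lo4 k == lo4 l).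
Proof. by rewrite -{1}(combK l) eq_comb. Qed.

Lemma tensE (A B : 'M[C]_2) (k l : 'I_4) :
  (A *t B) k l = A (hi4 k) (hi4 l) * B (lo4 k) (lo4 l).
Proof.
rewrite -{1}(combK k) -{1}(combK l) /comb.
exact: tensmxE.
Qed.

Lemma tens11 : ((1%:M : 'M[C]_2) *t (1%:M : 'M[C]_2) : 'M[C]_4) = 1%:M.
Proof.
apply/matrixP => k l; rewrite tensE !mxE eq_I4.
by case: (hi4 k == hi4 l); case: (lo4 k == lo4 l); rewrite /= ?mulr1 ?mulr0 ?mul0r.
Qed.

Definition combf n (y y' : cfg n 2) : cfg n 4 := [ffun i => comb (y i) (y' i)].
Definition hif n (x : cfg n 4) : cfg n 2 := [ffun i => hi4 (x i)].
Definition lof n (x : cfg n 4) : cfg n 2 := [ffun i => lo4 (x i)].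

Lemma hif_comb n (y y' : cfg n 2) : hif (combf y y') = y.
Proof. by apply/ffunP => i; rewrite !ffunE hi4_comb. Qed.
Lemma lof_comb n (y y' : cfg n 2) : lof (combf y y') = y'.
Proof. by apply/ffunP => i; rewrite !ffunE lo4_comb. Qed.
Lemma combfK n (x : cfg n 4) : combf (hif x) (lof x) = x.
Proof. by apply/ffunP => i; rewrite !ffunE combK. Qed.

Lemma sum_split n (F : cfg n 4 -> C) :
  \sum_x F x = \sum_(y : cfg n 2) \sum_(y' : cfg n 2) F (combf y y').
Proof.
rewrite pair_big /=.
rewrite (reindex (fun p : cfg n 2 * cfg n 2 => combf p.1 p.2)) //=.
exists (fun x => (hif x, lof x)) => [[y y'] _ | x _] /=.
  by rewrite hif_comb lof_comb.
by rewrite combfK.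
Qed.

Lemma sum_splitR n (F : cfg n 4 -> R) :
  \sum_x F x = \sum_(y : cfg n 2) \sum_(y' : cfg n 2) F (combf y y').
Proof.
rewrite pair_big /=.
rewrite (reindex (fun p : cfg n 2 * cfg n 2 => combf p.1 p.2)) //=.
exists (fun x => (hif x, lof x)) => [[y y'] _ | x _] /=.
  by rewrite hif_comb lof_comb.
by rewrite combfK.
Qed.

Lemma twocopyE n (a b : vec R n 2) x : twocopy a b x = a (hif x) * b (lof x).
Proof. by []. Qed.

Lemma twocopy_prodop n (A B : 'I_n -> 'M[C]_2) (a b : vec R n 2) :
  twocopy (prodop A a) (prodop B b) = prodop (fun i => A i *t B i) (twocopy a b).
Proof.
apply: functional_extensionality => x.
rewrite twocopyE /prodop sum_split big_distrl /=; apply: eq_bigr => y _.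
rewrite big_distrr /=; apply: eq_bigr => y' _.
rewrite twocopyE hif_comb lof_comb.
have -> : \prod_(i < n) (A i *t B i) (x i) (combf y y' i) =
   \prod_(i < n) A i (hif x i) (y i) * \prod_(i < n) B i (lof x i) (y' i).
  rewrite -big_split /=; apply: eq_bigr => i _.
  by rewrite tensE !ffunE hi4_comb lo4_comb.
by ring.
Qed.

Lemma vnorm2_twocopy n (a b : vec R n 2) :
  vnorm2 (twocopy a b) = vnorm2 a * vnorm2 b.
Proof.
rewrite /vnorm2 sum_splitR big_distrl /=; apply: eq_bigr => y _.
rewrite big_distrr /=; apply: eq_bigr => y' _.
by rewrite twocopyE hif_comb lof_comb cabs2M.
Qed.

Lemma twocopy_scale n (a b : vec R n 2) c c' :
  twocopy (vscale c a) (vscale c' b) = vscale (c * c') (twocopy a b).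
Proof.
by apply: functional_extensionality => x; rewrite /vscale !twocopyE; ring.
Qed.

Definition sw4 (k : 'I_4) : 'I_4 := comb (lo4 k) (hi4 k).

Lemma sw4K k : sw4 (sw4 k) = k.
Proof. by rewrite /sw4 hi4_comb lo4_comb combK. Qed.

Lemma swap4E (k l : 'I_4) : swap4 R k l = (l == sw4 k)%:R.
Proof. rewrite /swap4 mxE /sw4 eq_comb andbC; congr (_ && _)%:R; exact: eq_sym. Qed.

Definition swf n (x : cfg n 4) : cfg n 4 := [ffun i => sw4 (x i)].

Lemma swfK n (x : cfg n 4) : swf (swf x) = x.
Proof. by apply/ffunP => i; rewrite !ffunE sw4K. Qed.

Lemma prodop_swaps n (v : vec R n 4) x :
  prodop (fun _ => swap4 R) v x = v (swf x).
Proof.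
have E : forall y : cfg n 4, \prod_i swap4 R (x i) (y i) = (y == swf x)%:R.
  by move=> y; rewrite -prod_eq; apply: eq_bigr => i _; rewrite swap4E ffunE.
rewrite /prodop; under eq_bigr do rewrite E.
by rewrite -(sum_delta v (swf x)); apply: eq_bigr => y _; rewrite eq_sym.
Qed.

Lemma hif_swf n (x : cfg n 4) : hif (swf x) = lof x.
Proof. by apply/ffunP => i; rewrite !ffunE /sw4 hi4_comb. Qed.
Lemma lof_swf n (x : cfg n 4) : lof (swf x) = hif x.
Proof. by apply/ffunP => i; rewrite !ffunE /sw4 lo4_comb. Qed.

Lemma swaps_twocopy n (a b : vec R n 2) :
  prodop (fun _ => swap4 R) (twocopy a b) = twocopy b a.
Proof.
apply: functional_extensionality => x.
by rewrite prodop_swaps !twocopyE hif_swf lof_swf mulrC.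
Qed.

Definition one_fam n d : 'I_n -> 'M[C]_d := fun _ => 1%:M.
Definition ej n d (j : 'I_n) (a : 'I_d.+1) : cfg n d.+1 :=
  [ffun i => if i == j then a else ord0].

Lemma prodop_zero n d (M : 'I_n -> 'M[C]_d) : prodop M (fun _ => 0) = fun _ => 0.
Proof.
by apply: functional_extensionality => x; rewrite /prodop big1 // => y _; rewrite mulr0.
Qed.

Lemma upd_entry n d (j : 'I_n) (Y : 'M[C]_d.+1) a b :
  prodop (upd (@one_fam n d.+1) j Y) (delta (ej j b)) (ej j a) = Y a b.
Proof.
rewrite prodop_delta (bigD1 j) //= /upd /ej !ffunE eqxx big1 ?mulr1 //.
by move=> i /negbTE ni; rewrite ni !ffunE ni /one_fam mxE eqxx.
Qed.

Lemma sw40 : sw4 ord0 = ord0.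
Proof. by apply: val_inj; rewrite /sw4 /comb /hi4 /lo4 /= !inordK. Qed.

Lemma swaps_entry n (j : 'I_n) a b :
  prodop (fun _ => swap4 R) (delta (ej j b)) (ej j a) = swap4 R a b.
Proof.
rewrite prodop_delta (bigD1 j) //= /ej !ffunE eqxx big1 ?mulr1 //.
by move=> i /negbTE ni; rewrite !ffunE ni swap4E sw40 eqxx.
Qed.

Lemma ej_eq n d (j : 'I_n) (a b : 'I_d.+1) : (ej j a == ej j b) = (a == b).
Proof.
apply/eqP/eqP => [E|->] //.
by move/ffunP: E => /(_ j); rewrite !ffunE eqxx.
Qed.

Definition stab_hyp n (src : vec R n 4) :=
  forall op : vec R n 4 -> vec R n 4,
     in_stabilizer src op <->
     (op = prodop (fun _ => 1%:M) \/ op = prodop (fun _ => swap4 R)).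

Lemma stab_cases n (src : vec R n 4) (Hstab : stab_hyp src) (S : 'I_n -> 'M[C]_4) :
  (forall i, S i \in unitmx) -> prodop S src = src ->
  (forall v, prodop S v = v) \/ (forall v, prodop S v = prodop (fun _ => swap4 R) v).
Proof.
move=> SU SS; have : in_stabilizer src (prodop S) by exists S.
by case/Hstab => E; [left|right] => v; rewrite E ?prodop_id.
Qed.

Lemma no_sing n (src : vec R n 4) (Hstab : stab_hyp src) (N G : 'I_n -> 'M[C]_4) (d : C) :
  d != 0 -> (forall i, G i \in unitmx) ->
  prodop N src = vscale d (prodop G src) -> forall j, N j \in unitmx.
Proof.
move=> d0 GU HN j; apply: contraT => NU.
have [w w0 wN] : exists2 w : 'rV[C]_4, w != 0 & w *m N j = 0.
  have K0 : kermx (N j) != 0 by rewrite kermx_eq0 row_free_unit.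
  have [i Ki] : exists i, row i (kermx (N j)) != 0.
    apply/existsP; apply: contraT; rewrite negb_exists => /forallP H.
    case/eqP: K0; apply/matrixP => a b; move: (H a); rewrite negbK => /eqP/rowP/(_ b).
    by rewrite !mxE.
  by exists (row i (kermx (N j))); rewrite // -row_mul mulmx_ker row0.
set w' := w *m G j.
have w'0 : w' != 0.
  apply: contraNneq w0 => E; by rewrite -(mulmxK (GU j) w) -/w' E mul0mx.
set a0 := w' 0 0.
set t : C := if a0 == -1 then 2 else 1.
have t0 : t != 0 by rewrite /t; case: ifP => _; rewrite ?oner_eq0 ?pnatr_eq0.
set u : 'cV[C]_4 := t *: delta_mx 0 0.
set X := u *m w'.
have C0 : prodop (upd (@one_fam n 4) j X) src = fun _ => 0.
  have E1 : prodop (upd (@one_fam n 4) j (u *m w)) (prodop N src) = fun _ => 0.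
    rewrite prodop_comp -(prodop_upd0 (fun i => N i) j src); apply: eq_prodop => i.
    rewrite /upd; case: eqP => [->|_]; first by rewrite -mulmxA wN mulmx0.
    by rewrite /one_fam mul1mx.
  have E2 : prodop (upd G j (u *m w')) src = fun _ => 0.
    apply: functional_extensionality => x.
    move: E1; rewrite HN prodop_scale prodop_comp => /(congr1 (fun f => f x)).
    rewrite /vscale => /eqP; rewrite mulf_eq0 (negbTE d0) /= => /eqP <-.
    congr (prodop _ _ _); apply: functional_extensionality => i.
    by rewrite /upd /one_fam; case: eqP => [->|_]; rewrite ?mulmxA ?mul1mx.
  have := congr1 (prodop (upd (fun i => invmx (G i)) j 1%:M)) E2.
  rewrite prodop_zero prodop_comp => <-; apply: eq_prodop => i.
  by rewrite /upd /one_fam; case: (i == j); rewrite ?mul1mx ?mulVmx.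
have C1 : prodop (upd (@one_fam n 4) j (1%:M + X)) src = src.
  apply: functional_extensionality => x; rewrite prodop_updD C0 /= addr0.
  rewrite (@eq_prodop _ _ _ (@one_fam n 4)) ?prodop_id //.
  by move=> i; rewrite /upd; case: (i == j).
set a := t * a0.
have XX : X *m X = a *: X.
  rewrite /X mulmxA -[u *m w' *m u]mulmxA.
  have -> : w' *m u = a%:M.
    have u0 : u ord0 0 = t by rewrite /u !mxE /= mulr1.
    have uk : forall k : 'I_3, u (lift ord0 k) 0 = 0 by move=> k; rewrite /u !mxE /= mulr0.
    apply/matrixP => p q; rewrite (ord1 p) (ord1 q) [LHS]mxE [RHS]mxE big_ord_recl big1 /=.
      by rewrite u0 addr0 mulr1n /a /a0 mulrC.
    by move=> k _; rewrite uk mulr0.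
  by rewrite mul_mx_scalar scalemxAl.
have a1 : 1 + a != 0.
  rewrite /a /t; case: ifP => [/eqP ->|/negbT ne].
    by rewrite mulrN1 -[2]/(1+1) opprD addrA subrr sub0r oppr_eq0 oner_eq0.
  rewrite mul1r; apply: contra ne => /eqP E; apply/eqP.
  by rewrite -(addKr 1 a0) E addr0.
have U : 1%:M + X \in unitmx.
  suff : (1%:M + X) *m (1%:M - (1 + a)^-1 *: X) = 1%:M by case/mulmx1_unit.
  rewrite mulmxDl !mulmxDr !mulmx1 mul1mx !mulmxN -scalemxAr XX scalerA.
  rewrite addrACA -opprD.
  have -> : (1 + a)^-1 *: X + (1 + a)^-1 * a *: X = X.
    by rewrite -scalerDl -{1}[(1 + a)^-1]mulr1 -mulrDr mulVf // scale1r.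
  by rewrite addrK.
have E3 : forall b, (1%:M + X) 0 b = (0 == b)%:R.
  move=> b; have SU : forall i, upd (@one_fam n 4) j (1%:M + X) i \in unitmx.
    by move=> i; rewrite /upd; case: (i == j) => //; rewrite unitmx1.
  case: (stab_cases Hstab SU C1) => H.
    have := congr1 (fun f => f (ej j 0)) (H (delta (ej j b))).
    by rewrite /= upd_entry /delta ej_eq.
  have := congr1 (fun f => f (ej j 0)) (H (delta (ej j b))).
  by rewrite /= upd_entry swaps_entry swap4E sw40 eq_sym.
have : w' == 0.
  apply/eqP/matrixP => p b; rewrite (ord1 p) mxE.
  have := E3 b; rewrite mxE [1%:M _ _]mxE => /eqP.
  rewrite -subr_eq0 addrAC subrr add0r.
  rewrite /X mxE big_ord1 /u !mxE /=.
  by rewrite mulr1 mulf_eq0 (negbTE t0) => /eqP.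
by rewrite (negbTE w'0).
Qed.

Lemma vscaleK n d (c : C) (v : vec R n d) : c != 0 -> vscale c^-1 (vscale c v) = v.
Proof.
by move=> c0; apply: functional_extensionality => x; rewrite /vscale mulrA mulVf ?mul1r.
Qed.

Lemma stab_reduce n (src : vec R n 4) (Hstab : stab_hyp src) (N G : 'I_n -> 'M[C]_4)
    (d : C) (k : 'I_n) :
  d != 0 -> (forall i, G i \in unitmx) ->
  prodop N src = vscale d (prodop G src) ->
  (forall v, prodop N v = vscale d (prodop G v)) \/
  (forall v, prodop N v = vscale d (prodop G (prodop (fun _ => swap4 R) v))).
Proof.
move=> d0 GU HN.
have NU := no_sing Hstab d0 GU HN.
set S0 := fun i => invmx (G i) *m N i.
set S := upd S0 k (d^-1 *: S0 k).
have SU : forall i, S i \in unitmx.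
  move=> i; rewrite /S /upd /S0; case: (i == k); rewrite ?unitmxZ ?unitmx_mul ?unitmx_inv ?GU ?NU //.
  by rewrite unitfE invr_eq0.
have SS : forall v, prodop S v = vscale d^-1 (prodop S0 v) by move=> v; rewrite prodop_updZ.
have S0N : forall v, prodop S0 v = prodop (fun i => invmx (G i)) (prodop N v).
  by move=> v; rewrite prodop_comp.
have NG : forall v, prodop N v = prodop G (prodop S0 v).
  move=> v; rewrite prodop_comp; apply: eq_prodop => i.
  by rewrite /S0 mulmxA mulmxV ?mul1mx.
have Hsrc : prodop S src = src.
  rewrite SS S0N HN prodop_scale vscaleK // prodop_comp.
  rewrite (@eq_prodop _ _ _ (fun _ => 1%:M)) ?prodop_id // => i.
  by rewrite mulVmx.
have S0S : forall v, prodop S0 v = vscale d (prodop S v).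
  by move=> v; rewrite SS; apply: functional_extensionality => x; rewrite /vscale mulrA mulfV ?mul1r.
case: (stab_cases Hstab SU Hsrc) => H; [left|right] => v; rewrite NG S0S prodop_scale.
  by rewrite H.
by rewrite H.
Qed.

Lemma vscaleA n d (c c' : C) (v : vec R n d) : vscale c (vscale c' v) = vscale (c * c') v.
Proof. by apply: functional_extensionality => x; rewrite /vscale mulrA. Qed.

Lemma mask_bound (T : Type) (x0 : T) (K : seq T) (msk : seq bool) (P : T -> Prop)
    (f g : T -> R) :
  size msk = size K ->
  (forall k, (k < size K)%N -> nth false msk k -> P (nth x0 K k)) ->
  (forall x, P x -> f x <= g x) -> (forall x, 0 <= g x) ->
  \sum_(x <- mask msk K) f x <= \sum_(x <- K) g x.
Proof.
move=> + + Hfg Hg; elim: K msk => [|x K IH] [|b msk] //=; first by rewrite !big_nil.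
move=> [Hs] HP; have IH' := IH msk Hs (fun k Hk => HP k.+1 Hk).
case: b HP => HP; rewrite /= !big_cons.
  by apply: lerD => //; apply: Hfg; apply: (HP 0%N).
by apply: ler_wpDl.
Qed.

Lemma unit_at n d (j : 'I_n) (h : 'M[C]_d) i : h \in unitmx -> at_party j h i \in unitmx.
Proof. by move=> hU; rewrite /at_party; case: (i == j) => //; rewrite unitmx1. Qed.

Lemma ej_at n d (j : 'I_n) (a : 'I_d.+1) : ej j a j = a.
Proof. by rewrite /ej ffunE eqxx. Qed.

Lemma single_upper n (last : 'I_n) (psi : vec R n 2) (Hstab : stab_hyp (twocopy psi psi))
   (h : 'M[C]_2) (D : 'I_2 -> R) (a : 'I_2) (M : 'I_n -> 'M[C]_2) (c : C) :
  h \in unitmx -> adj h *m h = diag_mx (\row_k ofR (D k)) -> D a = 1 ->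
  prodop M psi = vscale c (prodop (at_party last h) psi) ->
  vnorm2 (prodop M psi) <=
    vnorm2 (prodop (at_party last h) psi) * vnorm2 (prodop M (delta (ej last a))).
Proof.
move=> hU HD Da HM.
have gge0 : 0 <= vnorm2 (prodop (at_party last h) psi) * vnorm2 (prodop M (delta (ej last a))).
  by rewrite mulr_ge0 // vnorm2_ge0.
rewrite HM vnorm2_scale.
have [->|c0] := eqVneq c 0.
  by rewrite /cabs2 /= expr0n addr0 mul0r.
set G2 := fun i => at_party last h i *t at_party last h i.
have G2U : forall i, G2 i \in unitmx.
  by move=> i; apply: tensmx_unit => //; apply: unit_at.
have E : prodop (fun i => M i *t M i) (twocopy psi psi) = vscale (c * c) (prodop G2 (twocopy psi psi)).
  by rewrite -!twocopy_prodop HM twocopy_scale.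
have cc0 : c * c != 0 by rewrite mulf_neq0.
set dl := delta (ej last a).
have Hd : prodop (fun i => M i *t M i) (twocopy dl dl) =
          vscale (c * c) (prodop G2 (twocopy dl dl)).
  case: (stab_reduce Hstab last cc0 G2U E) => H; rewrite H //.
  by rewrite swaps_twocopy.
move: Hd; rewrite -!twocopy_prodop => /(congr1 (@vnorm2 R n 4)).
rewrite vnorm2_scale !vnorm2_twocopy /dl (norm_at_delta _ _ HD) ej_at Da mulr1 cabs2M.
rewrite mulr1 -!expr2 => /eqP; rewrite eqrXn2 ?vnorm2_ge0 ?mulr_ge0 ?cabs2_ge0 // => /eqP ->.
by rewrite mulrC.
Qed.

Lemma vscale1 n d (v : vec R n d) : vscale 1 v = v.
Proof. by apply: functional_extensionality => x; rewrite /vscale mul1r. Qed.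

Lemma single_max n (last : 'I_n) (psi : vec R n 2) (Hstab : stab_hyp (twocopy psi psi))
   (h : 'M[C]_2) (D : 'I_2 -> R) (a : 'I_2) :
  h \in unitmx -> adj h *m h = diag_mx (\row_k ofR (D k)) -> D a = 1 ->
  (forall k, D k <= 1) ->
  0 < vnorm2 (prodop (at_party last h) psi) ->
  is_max_sep_prob psi
    (vscale (ofR (Num.sqrt (vnorm2 (prodop (at_party last h) psi)))^-1) (prodop (at_party last h) psi))
    (Num.sqrt (vnorm2 (prodop (at_party last h) psi)) ^+ 2).
Proof.
move=> hU HD Da D1 Npos.
set psi1 := prodop (at_party last h) psi.
set N1 := vnorm2 psi1.
set n1 := Num.sqrt N1.
have n1E : n1 ^+ 2 = N1 by rewrite sqr_sqrtr // ltW.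
have n10 : n1 != 0 by rewrite sqrtr_eq0 -ltNge.
rewrite n1E; split.
  move=> K q Hsep [msk [Hs [Hiff ->]]].
  apply: le_trans (mask_bound (x0 := fun _ => 1%:M)
     (P := fun M => proportional (prodop M psi) (vscale (ofR n1^-1) psi1))
     (f := fun M => vnorm2 (prodop M psi))
     (g := fun M => N1 * vnorm2 (prodop M (delta (ej last a)))) Hs _ _ _) _.
  - by move=> k Hk; case: (Hiff k Hk).
  - move=> M [c' Hc']; apply: (single_upper Hstab (c := c' * ofR n1^-1) hU HD Da).
    by rewrite Hc' vscaleA.
  - by move=> M; rewrite mulr_ge0 // vnorm2_ge0.
  rewrite -mulr_sumr -[X in _ <= X]mulr1; apply: ler_wpM2l; first exact: vnorm2_ge0.
  by rewrite -(vnorm2_delta (ej last a)); apply: Hsep.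
move=> u Hu; apply: (Hu [:: at_party last h]).
  move=> v; rewrite big_seq1 (norm_at _ _ HD) /vnorm2; apply: ler_sum => y _.
  by apply: ler_piMl; rewrite ?cabs2_ge0.
exists [:: true]; split => //; split.
  move=> k; rewrite /= ltnS leqn0 => /eqP -> /=; split => // _.
  exists (ofR n1); rewrite vscaleA -ofRM mulfV // ofR1 vscale1 //.
by rewrite /= big_cons big_nil addr0.
Qed.

Lemma tens_mul4 (A B A' B' : 'M[C]_2) :
  ((A *t B : 'M[C]_4) *m (A' *t B' : 'M[C]_4)) = ((A *m A') *t (B *m B') : 'M[C]_4).
Proof. exact: (@tensmx_mul _ 2 2 2 2 2 2 A B A' B'). Qed.

Lemma adj_tens (A B : 'M[C]_2) : adj (A *t B) = adj A *t adj B.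
Proof. by rewrite /adj map_mxT trmx_tens. Qed.

Lemma cvnorm2C d (w : 'cV[C]_d) : ofR (cvnorm2 w) = \sum_j Num.conj (w j 0) * w j 0.
Proof. by rewrite /cvnorm2 ofR_sum; apply: eq_bigr => j _; rewrite cabs2E. Qed.

Lemma cnorm d (A : 'M[C]_d) (D : 'I_d -> R) (v : 'cV[C]_d) :
  adj A *m A = diag_mx (\row_k ofR (D k)) ->
  cvnorm2 (A *m v) = \sum_b D b * cabs2 (v b 0).
Proof.
move=> HA; apply: ofR_inj; rewrite cvnorm2C ofR_sum.
have E : forall b b', \sum_j Num.conj (A j b) * A j b' = (adj A *m A) b b'.
  by move=> b b'; rewrite mxE; apply: eq_bigr => j _; rewrite /adj !mxE.
transitivity (\sum_b \sum_b' Num.conj (v b 0) * v b' 0 * (adj A *m A) b b').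
  under eq_bigr => j _ do rewrite mxE rmorph_sum /= big_distrl /=.
  rewrite exchange_big /=; apply: eq_bigr => b _.
  under eq_bigr => j _ do rewrite big_distrr /=.
  rewrite exchange_big /=; apply: eq_bigr => b' _.
  rewrite -E mulr_sumr; apply: eq_bigr => j _; rewrite rmorphM /=; ring.
apply: eq_bigr => b _; rewrite HA (bigD1 b) //= big1 ?addr0.
  by rewrite !mxE eqxx mulr1n ofRM cabs2E; ring.
by move=> b' /negbTE nb; rewrite !mxE eq_sym nb mulr0n mulr0.
Qed.

Lemma swap_col (v : 'cV[C]_4) b : (swap4 R *m v) b 0 = v (sw4 b) 0.
Proof.
rewrite mxE (bigD1 (sw4 b)) //= swap4E eqxx mul1r big1 ?addr0 //.
by move=> l /negbTE nl; rewrite swap4E nl mul0r.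
Qed.

Lemma cvnorm2_swap (v : 'cV[C]_4) : cvnorm2 (swap4 R *m v) = cvnorm2 v.
Proof.
rewrite /cvnorm2; under eq_bigr do rewrite swap_col.
by rewrite (reindex_inj (can_inj sw4K)) /=; apply: eq_bigr => b _; rewrite sw4K.
Qed.

Lemma cabs2_ofR (x : R) : cabs2 (ofR x) = x ^+ 2.
Proof. by rewrite /cabs2 /= expr0n addr0. Qed.

Lemma hi4_sw k : hi4 (sw4 k) = lo4 k. Proof. by rewrite /sw4 hi4_comb. Qed.
Lemma lo4_sw k : lo4 (sw4 k) = hi4 k. Proof. by rewrite /sw4 lo4_comb. Qed.

Section TwoCopy.
Variables (n : nat) (last : 'I_n) (psi : vec R n 2) (eps : R) (h1 h2 : 'M[C]_2)
  (e1 e2 : 'I_2 -> R).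
Hypothesis Hstab : stab_hyp (twocopy psi psi).
Hypotheses (h1U : h1 \in unitmx) (h2U : h2 \in unitmx).
Hypothesis HD1 : adj h1 *m h1 = diag_mx (\row_k ofR (e1 k)).
Hypothesis HD2 : adj h2 *m h2 = diag_mx (\row_k ofR (e2 k)).
Hypotheses (e10 : e1 0 = 1) (e11 : e1 1 = eps) (e20 : e2 0 = eps) (e21 : e2 1 = 1).

Definition Gf : 'I_n -> 'M[C]_4 := fun i => at_party last h1 i *t at_party last h2 i.

Lemma GfU i : Gf i \in unitmx.
Proof. by rewrite /Gf; apply: (@tensmx_unit _ 2 2) => //; apply: unit_at. Qed.

Lemma Gf_norm a b :
  vnorm2 (prodop Gf (twocopy (delta (ej last a)) (delta (ej last b)))) = e1 a * e2 b.
Proof.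
by rewrite -twocopy_prodop vnorm2_twocopy (norm_at_delta _ _ HD1) (norm_at_delta _ _ HD2) !ej_at.
Qed.

Let src := twocopy psi psi.
Let NN := vnorm2 (prodop Gf src).
Let T (M : 'I_n -> 'M[C]_4) (a b : 'I_2) :=
  vnorm2 (prodop M (twocopy (delta (ej last a)) (delta (ej last b)))).

Lemma two_per (M : 'I_n -> 'M[C]_4) (c : C) :
  prodop M src = vscale c (prodop Gf src) ->
  vnorm2 (prodop M src) <= NN / (1 + eps ^+ 2) * (T M 0 1 + T M 1 0).
Proof.
move=> HM; rewrite HM vnorm2_scale.
have ep : 1 + eps ^+ 2 != 0 by rewrite gt_eqF // ltr_pwDl // sqr_ge0.
have [->|c0] := eqVneq c 0.
  rewrite /cabs2 /= expr0n addr0 mul0r mulr_ge0 // ?addr_ge0 ?vnorm2_ge0 //.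
  by rewrite mulr_ge0 ?vnorm2_ge0 // invr_ge0 addr_ge0 // ?sqr_ge0.
have HT : T M 0 1 + T M 1 0 = cabs2 c * (1 + eps ^+ 2).
  rewrite /T; case: (stab_reduce Hstab last c0 GfU HM) => H; rewrite !H ?swaps_twocopy;
  rewrite !vnorm2_scale !Gf_norm e10 e11 e20 e21; rewrite /=; ring.
rewrite HT /NN; set V := vnorm2 _.
have -> : cabs2 c * V = V / (1 + eps ^+ 2) * (cabs2 c * (1 + eps ^+ 2)) by field.
by [].
Qed.

Lemma two_upper (t : C) (K : kraus R n 4) q :
  separable_op K -> success_prob K src (vscale t (prodop Gf src)) q ->
  q <= 2 / (1 + eps ^+ 2) * NN.
Proof.
move=> Hsep [msk [Hs [Hiff ->]]].
have ep : 0 < 1 + eps ^+ 2 by rewrite ltr_pwDl // sqr_ge0.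
apply: le_trans (mask_bound (x0 := fun _ => 1%:M)
     (P := fun M => proportional (prodop M src) (vscale t (prodop Gf src)))
     (f := fun M => vnorm2 (prodop M src))
     (g := fun M => NN / (1 + eps ^+ 2) * (T M 0 1 + T M 1 0)) Hs _ _ _) _.
- by move=> k Hk; case: (Hiff k Hk).
- by move=> M [c' Hc']; apply: (two_per (c := c' * t)); rewrite Hc' vscaleA.
- move=> M; rewrite mulr_ge0 ?addr_ge0 ?vnorm2_ge0 //.
  by rewrite mulr_ge0 ?vnorm2_ge0 // invr_ge0 ltW.
rewrite -mulr_sumr big_split /=.
have S1 : \sum_(M <- K) T M 0 1 <= 1.
  have := Hsep (twocopy (delta (ej last 0)) (delta (ej last 1))).
  by rewrite vnorm2_twocopy !vnorm2_delta mulr1.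
have S2 : \sum_(M <- K) T M 1 0 <= 1.
  have := Hsep (twocopy (delta (ej last 1)) (delta (ej last 0))).
  by rewrite vnorm2_twocopy !vnorm2_delta mulr1.
have -> : 2 / (1 + eps ^+ 2) * NN = NN / (1 + eps ^+ 2) * (1 + 1).
  by ring.
apply: ler_wpM2l; last exact: lerD.
by rewrite mulr_ge0 ?vnorm2_ge0 // invr_ge0 ltW.
Qed.


Hypothesis eps01 : 0 < eps < 1.

Let c2 := (1 + eps ^+ 2)^-1.
Let cst := Num.sqrt c2.
Let A0 : 'M[C]_4 := ofR cst *: (h1 *t h2).
Let D0 (k : 'I_4) : R := c2 * (e1 (hi4 k) * e2 (lo4 k)).

Lemma c2_gt0 : 0 < c2.
Proof. by rewrite /c2 invr_gt0 ltr_pwDl // sqr_ge0. Qed.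

Lemma cst2 : cst ^+ 2 = c2.
Proof. by rewrite /cst sqr_sqrtr // ltW // c2_gt0. Qed.

Lemma HA0 : adj A0 *m A0 = diag_mx (\row_k ofR (D0 k)).
Proof.
rewrite /A0 adjZ adj_tens -scalemxAl -scalemxAr scalerA tens_mul4 HD1 HD2.
apply/matrixP => k l; rewrite mxE tensE !mxE [k == l]eq_I4.
rewrite conj_ofR -ofRM -expr2 cst2 /D0.
by case: (hi4 k == hi4 l); case: (lo4 k == lo4 l);
  rewrite /= ?mulr1n ?mulr0n ?mulr0 ?mul0r ?ofRM ?mulr0 ?mul0r.
Qed.

Lemma D0_bound k : D0 k + D0 (sw4 k) <= 1.
Proof.
rewrite /D0 hi4_sw lo4_sw -mulrDr.
have ep : 0 < 1 + eps ^+ 2 by rewrite ltr_pwDl // sqr_ge0.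
rewrite /c2 mulrC -ler_pdivlMr // ?invr_gt0 // invrK mul1r.
case/andP: eps01 => e0 e1'.
have I2 : forall x : 'I_2, x = 0 \/ x = 1.
  by case=> [[|[|m]] Hm] //; [left|right]; apply: val_inj.
case: (I2 (hi4 k)) => ->; case: (I2 (lo4 k)) => ->; rewrite ?(e10, e11, e20, e21) ?mul1r ?mulr1.
all: nra.
Qed.

Fixpoint chain (l : seq 'I_n) : locc R n 4 :=
  if l is i :: l' then @LRound R n 4 i 1 (fun _ => swap4 R) (fun _ => chain l')
  else @LStop R n 4.

Lemma branches_chain l : uniq l ->
  branches (chain l) = [:: fun j => if j \in l then swap4 R else 1%:M].
Proof.
elim: l => [|i l IH] /=.
  by move=> _; congr [:: _]; apply: functional_extensionality => j; rewrite in_nil.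
case/andP => il ul; rewrite IH // enum_ordSl enum_ord0 /=.
congr [:: _]; apply: functional_extensionality => j.
rewrite in_cons /at_party; case: eqP => [->|_] /=.
  by rewrite (negbTE il) mul1mx.
by rewrite mulmx1.
Qed.

Lemma chain_ok l : locc_ok (chain l).
Proof.
elim: l => [|i l IH] //=; split => // v.
by rewrite big_ord1 cvnorm2_swap.
Qed.

Let lst := [seq i <- enum 'I_n | i != last].
Lemma lst_mem j : (j \in lst) = (j != last).
Proof. by rewrite mem_filter mem_enum andbT. Qed.
Lemma lst_uniq : uniq lst.
Proof. by rewrite filter_uniq // enum_uniq. Qed.

Let Af (k : 'I_2) : 'M[C]_4 := if val k == 0%N then A0 else A0 *m swap4 R.
Definition Pr : locc R n 4 :=
  @LRound R n 4 last 2 Af (fun k => if val k == 0%N then @LStop R n 4 else chain lst).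

Lemma branchesP : branches Pr =
  [:: fun j => 1%:M *m at_party last A0 j;
      fun j => (if j \in lst then swap4 R else 1%:M) *m at_party last (A0 *m swap4 R) j].
Proof. by rewrite /Pr /= !enum_ordSl enum_ord0 /= branches_chain // lst_uniq. Qed.

Lemma B0E v : prodop (fun j => 1%:M *m at_party last A0 j) v = prodop (at_party last A0) v.
Proof. by apply: eq_prodop => i; rewrite mul1mx. Qed.

Lemma B1E v :
  prodop (fun j => (if j \in lst then swap4 R else 1%:M) *m at_party last (A0 *m swap4 R) j) v
  = prodop (at_party last A0) (prodop (fun _ => swap4 R) v).
Proof.
rewrite prodop_comp; apply: eq_prodop => i; rewrite lst_mem /at_party.
by case: (i == last) => /=; rewrite ?mul1mx ?mulmx1.
Qed.

Lemma nA0 v : vnorm2 (prodop (at_party last A0) v) = \sum_(y : cfg n 4) D0 (y last) * cabs2 (v y).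
Proof. by rewrite (norm_at last v HA0). Qed.

Lemma A0Gf v : prodop (at_party last A0) v = vscale (ofR cst) (prodop Gf v).
Proof.
rewrite -(prodop_updZ Gf last); apply: eq_prodop => i; rewrite /upd /Gf /A0 /at_party eqxx.
by case: (i == last); rewrite ?tens11.
Qed.

Lemma sep_P : separable_op (branches Pr).
Proof.
move=> v; rewrite branchesP big_cons big_seq1 B0E B1E !nA0.
under [X in _ + X]eq_bigr do rewrite prodop_swaps.
rewrite [X in _ + X](reindex_inj (can_inj (@swfK n))) /=.
under [X in _ + X]eq_bigr do rewrite swfK ffunE.
rewrite -big_split /vnorm2; apply: ler_sum => y _; rewrite /= -mulrDl.
by apply: ler_piMl; rewrite ?cabs2_ge0 ?D0_bound.
Qed.

Lemma ok_P : locc_ok Pr.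
Proof.
split; last by move=> k; case: ifP => _ //; apply: chain_ok.
move=> v; rewrite !big_ord_recl big_ord0 addr0 /Af /=.
rewrite -mulmxA !(cnorm _ HA0).
under [X in _ + X]eq_bigr do rewrite swap_col.
rewrite [X in _ + X](reindex_inj (can_inj sw4K)) /=.
under [X in _ + X]eq_bigr do rewrite sw4K.
rewrite -big_split /cvnorm2; apply: ler_sum => b _; rewrite /= -mulrDl addrC.
by apply: ler_piMl; rewrite ?cabs2_ge0 // addrC D0_bound.
Qed.

Lemma succ_P (t : C) : t != 0 ->
  success_prob (branches Pr) src (vscale t (prodop Gf src)) (2 * c2 * NN).
Proof.
move=> t0; exists [:: true; true]; split; first by rewrite branchesP.
split.
  move=> k; rewrite branchesP; case: k => [|[|k]] // _ /=; split => // _;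
    exists (ofR cst / t); rewrite vscaleA divfK //.
    by rewrite B0E A0Gf.
  by rewrite B1E swaps_twocopy A0Gf.
rewrite branchesP /= big_cons big_seq1 B0E B1E swaps_twocopy A0Gf vnorm2_scale.
by rewrite cabs2_ofR cst2 /NN; ring.
Qed.
End TwoCopy. End Basics.
Close Scope complex_scope.

Theorem mainTheorem6 (R : realType) (n : nat) (last : 'I_n)
    (psi : vec R n 2) (eps : R) (h1 h2 : 'M[R[i]]_2) :
  val last = n.-1 ->
  vnorm2 psi = 1 ->
  (forall op : vec R n 4 -> vec R n 4,
     in_stabilizer (twocopy psi psi) op <->
     (op = prodop (fun _ => 1%:M) \/ op = prodop (fun _ => swap4 R))) ->
  0 < eps < 1 ->
  h1 \in unitmx -> h2 \in unitmx ->
  adj h1 *m h1 = diag_mx (\row_(j < 2) (if j == 0 then 1 else ofR eps)) ->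
  adj h2 *m h2 = diag_mx (\row_(j < 2) (if j == 0 then ofR eps else 1)) ->
  let psi1 := prodop (at_party last h1) psi in
  let psi2 := prodop (at_party last h2) psi in
  let n1 := Num.sqrt (vnorm2 psi1) in
  let n2 := Num.sqrt (vnorm2 psi2) in
  let source := twocopy psi psi in
  let target := vscale (ofR (n1 * n2)^-1) (twocopy psi1 psi2) in
  let p := 2 / (1 + eps ^+ 2) * (n1 * n2) ^+ 2 in
  [/\ is_max_sep_prob source target p,
      (exists P : locc R n 4, locc_ok P /\ success_prob (branches P) source target p),
      (n1 * n2) ^+ 2 < p,
      is_max_sep_prob psi (vscale (ofR n1^-1) psi1) (n1 ^+ 2) &
      is_max_sep_prob psi (vscale (ofR n2^-1) psi2) (n2 ^+ 2)].
Proof.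
move=> _ Hpsi Hstab eps01 h1U h2U H1 H2 psi1 psi2 n1 n2 source target p.
have Hst : stab_hyp (twocopy psi psi) by [].
set e1 : 'I_2 -> R := fun k => if k == 0 then 1 else eps.
set e2 : 'I_2 -> R := fun k => if k == 0 then eps else 1.
have HD1 : adj h1 *m h1 = diag_mx (\row_k ofR (e1 k)).
  by rewrite H1; congr diag_mx; apply/rowP => k; rewrite !mxE /e1; case: (k == 0).
have HD2 : adj h2 *m h2 = diag_mx (\row_k ofR (e2 k)).
  by rewrite H2; congr diag_mx; apply/rowP => k; rewrite !mxE /e2; case: (k == 0).
have e10 : e1 0 = 1 by [].
have e11 : e1 1 = eps by [].
have e20 : e2 0 = eps by [].
have e21 : e2 1 = 1 by [].
case/andP: (eps01) => eps0 eps1.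
have pos : forall (e : 'I_2 -> R) h, (forall k, eps <= e k) ->
    adj h *m h = diag_mx (\row_k ofR (e k)) -> 0 < vnorm2 (prodop (at_party last h) psi).
  move=> e h He HD; rewrite (norm_at _ _ HD).
  apply: lt_le_trans (_ : eps * vnorm2 psi <= _); first by rewrite Hpsi mulr1.
  rewrite /vnorm2 mulr_sumr; apply: ler_sum => y _; apply: ler_wpM2r => //.
  exact: cabs2_ge0.
have N1pos : 0 < vnorm2 psi1.
  apply: (pos e1) HD1 => k; rewrite /e1; case: (k == 0) => //; exact: ltW.
have N2pos : 0 < vnorm2 psi2.
  apply: (pos e2) HD2 => k; rewrite /e2; case: (k == 0) => //; exact: ltW.
have n1pos : 0 < n1 by rewrite sqrtr_gt0.
have n2pos : 0 < n2 by rewrite sqrtr_gt0.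
have NNE : vnorm2 (prodop (Gf last h1 h2) source) = (n1 * n2) ^+ 2.
  rewrite /source /Gf -twocopy_prodop vnorm2_twocopy exprMn.
  by rewrite /n1 /n2 !sqr_sqrtr // ltW.
have tgt : target = vscale (ofR (n1 * n2)^-1) (prodop (Gf last h1 h2) source).
  by rewrite /target /source /Gf -twocopy_prodop.
have t0 : ofR (n1 * n2)^-1 != 0.
  apply/eqP => /(congr1 (@complex.Re R)) /= /eqP; rewrite invr_eq0 mulf_eq0.
  by rewrite !gt_eqF.
have Hsucc := succ_P last psi eps h1 h2 t0.
rewrite -tgt NNE in Hsucc.
split.
- split.
    move=> K q Hsep; rewrite tgt => Hs.
    by rewrite /p -NNE; apply: (two_upper Hst h1U h2U HD1 HD2 e10 e11 e20 e21 Hsep Hs).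
  move=> u Hu; apply: (Hu _ _ _ Hsucc).
  exact: (sep_P last HD1 HD2 e10 e11 e20 e21 eps01).
- exists (Pr last eps h1 h2); split => //.
  exact: (ok_P last HD1 HD2 e10 e11 e20 e21 eps01).
- rewrite /p ltr_pMl ?exprn_gt0 ?mulr_gt0 //.
  have ep : 0 < 1 + eps ^+ 2 by rewrite ltr_pwDl // sqr_ge0.
  rewrite ltr_pdivlMr // mul1r.
  have : eps ^+ 2 < 1 by rewrite expr2; nra.
  by lra.
- apply: (single_max Hst (a := 0) h1U HD1) => //.
  by move=> k; rewrite /e1; case: (k == 0) => //; exact: ltW.
- apply: (single_max Hst (a := 1) h2U HD2) => //.
  by move=> k; rewrite /e2; case: (k == 0) => //; exact: ltW.
Qed.
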